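(* Let $G=(V,E)$ be a graph with vertex weights $w: V \to \mathbb{Z}^+$. There exists a set $S \subseteq V$ attaining the minimum in $\mathrm{wvi}(G) = \min_{S \subseteq V} \{ w(S) + \max_{D} w(D) \}$ (maximum over connected components $D$ of $G-S$) such that for every connected component $D$ of $G - S$ and every module $M$ of $G$, one of the following holds: (i) $M \cap D = \emptyset$, (ii) $M \subseteq D$, or (iii) $D \subseteq M$.
   Context: Graphs are finite, simple and undirected; for $X \subseteq V$, $w(X) = \sum_{x \in X} w(x)$, and connected components are identified with their vertex sets. A module of $G$ is a set $M \subseteq V$ such that every vertex $x \in V \setminus M$ is adjacent either to all vertices of $M$ or to none of them. *)

(* Defs.v *)
(* A finite simple graph is a symmetric irreflexive relation
   e on a finType T (vertex set V = T). *)
From mathcomp Require Import all_boot.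
Set Implicit Arguments. Unset Strict Implicit. Unset Printing Implicit Defensive.

Section Defs.
Variable T : finType.

Definition simple_graph (e : rel T) : Prop := symmetric e /\ irreflexive e.

Definition wset (w : T -> nat) (X : {set T}) : nat := \sum_(x in X) w x.

Definition del_rel (e : rel T) (S : {set T}) : rel T :=
  fun a b => [&& e a b, a \notin S & b \notin S].

Definition comp_of (e : rel T) (S : {set T}) (x : T) : {set T} :=
  [set y | (y \notin S) && connect (del_rel e S) x y].

Definition is_component (e : rel T) (S D : {set T}) : Prop :=
  exists2 x, x \notin S & D = comp_of e S x.

(* w(S) + max over components D of G - S of w(D) (max of the empty family = 0) *)
Definition wvi_val (e : rel T) (w : T -> nat) (S : {set T}) : nat :=
  wset w S + \max_(x | x \notin S) wset w (comp_of e S x).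

Definition wvi_optimal (e : rel T) (w : T -> nat) (S : {set T}) : Prop :=
  forall S' : {set T}, wvi_val e w S <= wvi_val e w S'.

Definition is_module (e : rel T) (M : {set T}) : Prop :=
  forall x, x \notin M ->
    (forall y, y \in M -> e x y) \/ (forall y, y \in M -> ~~ e x y).

End Defs.

(* Main.v *)
Require Import Defs.
From Stdlib Require Import Classical.
From mathcomp Require Import all_boot.
Set Implicit Arguments. Unset Strict Implicit. Unset Printing Implicit Defensive.

Section Helpers.
Variable T : finType.

Lemma connect_pres (r r' : rel T) (P : pred T) x y :
  (forall u v, P u -> r u v -> P v && r' u v) -> P x -> connect r x y ->
  P y && connect r' x y.
Proof.
move=> H Px /connectP [p pth ->]; elim: p x Px pth => [|v p IH] x Px /=.
  by rewrite Px connect0.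
case/andP => rxv pth; have /andP[Pv r'xv] := H _ _ Px rxv.
have /andP[Pl c] := IH v Pv pth.
by rewrite Pl (connect_trans (connect1 r'xv) c).
Qed.

Lemma connect_cross (r : rel T) (P : pred T) x y :
  connect r x y -> P x -> ~~ P y ->
  exists u v, [/\ connect r x u, P u, ~~ P v & r u v].
Proof.
move=> /connectP [p pth ->]; elim: p x pth => [|v p IH] x /=.
  by move=> _ ->.
case/andP => rxv pth Px Pl.
case Pv: (P v).
  have [u [v' [c1 Pu Pv' ruv]]] := IH v pth Pv Pl.
  by exists u, v'; split=> //; apply: connect_trans (connect1 rxv) c1.
by exists x, v; rewrite Pv; split.
Qed.

Lemma wset_sub (w : T -> nat) (A B : {set T}) : A \subset B -> wset w A <= wset w B.
Proof.
move=> sAB; rewrite /wset (big_setID (A:=B) A) /=.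
by move/setIidPr: sAB => ->; apply: leq_addr.
Qed.

Lemma wset_U (w : T -> nat) (A B : {set T}) : wset w (A :|: B) <= wset w A + wset w B.
Proof.
rewrite /wset (big_setID (A:=A :|: B) A) /=.
have -> : (A :|: B) :&: A = A by apply/setIidPr; apply: subsetUl.
rewrite leq_add2l; apply: (wset_sub w); apply/subsetP => x.
by rewrite !inE; case: (x \in A) => //= /andP[_ ->].
Qed.

Variable e : rel T.
Hypothesis esym : symmetric e.

Lemma del_sym S : symmetric (del_rel e S).
Proof. by move=> a b; rewrite /del_rel esym; case: (a \in S); case: (b \in S); rewrite ?andbF. Qed.

Lemma step (w : T -> nat) (S D M : {set T}) :
  is_component e S D -> is_module e M -> ~~ [disjoint M & D] ->
  ~~ (M \subset D) -> ~~ (D \subset M) ->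
  exists S' : {set T}, wvi_val e w S' <= wvi_val e w S /\ #|S'| < #|S|.
Proof.
move=> [x0 x0S ->] modM.
set D0 := comp_of e S x0.
move=> /pred0Pn [a /andP [aM aD]] /subsetPn [y yM yD] /subsetPn [z zD zM].
have inD t : (t \in D0) = (t \notin S) && connect (del_rel e S) x0 t.
  by rewrite /D0 /comp_of inE.
have /andP[aS ca] : (a \notin S) && connect (del_rel e S) x0 a by rewrite -inD.
have /andP[zS cz] : (z \notin S) && connect (del_rel e S) x0 z by rewrite -inD.
have caz : connect (del_rel e S) a z.
  by apply: connect_trans _ cz; rewrite (sym_connect_sym (del_sym S)).
have [u [v [cau uM vM ruv]]] := connect_cross (P := mem M) caz aM zM.
move: (ruv) => /and3P [euv uS vS].
have vD : v \in D0.
  by rewrite inD vS (connect_trans ca (connect_trans cau (connect1 ruv))).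
have allv : forall t, t \in M -> e v t.
  case: (modM v vM) => // H; by move: (H u uM); rewrite esym euv.
have MS : forall t, t \in M -> t \notin D0 -> t \in S.
  move=> t tM; apply: contraR => tS; rewrite inD tS.
  move: vD; rewrite inD => /andP[_ cv]; apply: connect_trans cv (connect1 _).
  by rewrite /del_rel allv //= vS.
set B := M :\: D0.
have BS : B \subset S by apply/subsetP => t; rewrite inE => /andP[tD tM]; apply: MS.
set S' := S :\: B.
set X := D0 :|: B.
have inS' t : (t \in S') = (t \notin B) && (t \in S) by rewrite inE.
have closeX : forall p q, p \in X -> del_rel e S' p q -> q \in X.
  move=> p q pX /and3P [epq pS' qS'].
  case qS: (q \in S).
    by move: qS'; rewrite inS' qS andbT negbK => qB; rewrite inE qB orbT.
  move: pX; rewrite inE => /orP [pD|pB].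
    rewrite inE; apply/orP; left; rewrite inD qS /=.
    move: pD; rewrite inD => /andP[pS cp]; apply: connect_trans cp (connect1 _).
    by rewrite /del_rel epq pS qS.
  have pM : p \in M by move: pB; rewrite inE => /andP[].
  case qM: (q \in M).
    rewrite inE; apply/orP; left; apply: contraT => qD.
    by move: (MS q qM qD); rewrite qS.
  have eaq : e a q.
    case: (modM q (negbT qM)) => H; first by rewrite esym H.
    by move: (H p pM); rewrite esym epq.
  rewrite inE; apply/orP; left; rewrite inD qS /=.
  apply: connect_trans ca (connect1 _); by rewrite /del_rel eaq aS qS.
have XS' : forall t, t \notin X -> t \notin S' -> t \notin S.
  move=> t; rewrite inS' inE negb_or => /andP[_ tB]; by rewrite tB.
have bound : forall x, x \notin S' ->
    wset w (comp_of e S' x) <= wset w B + \max_(x | x \notin S) wset w (comp_of e S x).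
  move=> x xS'.
  case xX: (x \in X).
    have sub : comp_of e S' x \subset X.
      apply/subsetP => t; rewrite inE => /andP[_ ct].
      have cl : forall p q, (mem X) p -> del_rel e S' p q -> (mem X) q && del_rel e S' p q.
        move=> p q pX rpq; apply/andP; split=> //; exact: (closeX p q pX rpq).
      by case/andP: (connect_pres cl xX ct).
    apply: leq_trans (wset_sub w sub) _; apply: leq_trans (wset_U w D0 B) _.
    rewrite addnC leq_add2l /D0; exact: leq_bigmax_cond.
  have sub : comp_of e S' x \subset comp_of e S x.
    apply/subsetP => t; rewrite /comp_of in_set => /andP[tS' ct].
    have cl : forall p q, (predC (mem X)) p -> del_rel e S' p q -> (predC (mem X)) q && del_rel e S p q.
      move=> p q /= pX rpq; move: (rpq) => /and3P [epq pS' qS'].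
      have qX : q \notin X.
        apply: contra pX => qX; apply: (closeX q p qX); by rewrite del_sym.
      by rewrite qX /del_rel epq (XS' p) // (XS' q).
    have xX' : (predC (mem X)) x by rewrite /= xX.
    case/andP: (connect_pres cl xX' ct) => /= tX ct'.
    by rewrite in_set ct' andbT; exact: (XS' t tX tS').
  apply: leq_trans (wset_sub w sub) _; apply: leq_trans (leq_addl (wset w B) _).
  apply: leq_bigmax_cond; exact: (XS' x (negbT xX) xS').
exists S'; split.
  rewrite /wvi_val.
  have -> : wset w S = wset w B + wset w S'.
    by rewrite /wset (big_setID (A:=S) B) /=; move/setIidPr: BS => ->.
  rewrite [wset w B + _]addnC -addnA leq_add2l.
  by apply/bigmax_leqP => x xS'; apply: bound.
apply: proper_card; apply/properP; split; first exact: subsetDl.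
exists y; last by rewrite inS' inE yM yD.
by apply: (MS y yM yD).
Qed.

End Helpers.

Theorem lemma11 (T : finType) (e : rel T) (w : T -> nat) :
  simple_graph e -> (forall x, 0 < w x) ->
  exists S : {set T}, wvi_optimal e w S /\
    forall D M : {set T}, is_component e S D -> is_module e M ->
      [disjoint M & D] \/ M \subset D \/ D \subset M.
Proof.
move=> [esym _] _.
have [S0 opt0] : exists S, wvi_optimal e w S.
  exists [arg min_(S < setT) wvi_val e w S].
  by case: arg_minnP => // S _ H S'; apply: H.
have: forall n (S : {set T}), #|S| < n -> wvi_optimal e w S ->
  exists S : {set T}, wvi_optimal e w S /\
    forall D M : {set T}, is_component e S D -> is_module e M ->
      [disjoint M & D] \/ M \subset D \/ D \subset M.
  elim=> [//|n IH] S ltS optS.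
  case: (classic (forall D M : {set T}, is_component e S D -> is_module e M ->
      [disjoint M & D] \/ M \subset D \/ D \subset M)) => H.
    by exists S.
  apply: NNPP => HN; apply: H => D M cD mM.
  case d1: [disjoint M & D]; first by left.
  case d2: (M \subset D); first by right; left.
  case d3: (D \subset M); first by right; right.
  have [S' [le lt]] := step esym w cD mM (negbT d1) (negbT d2) (negbT d3).
  exfalso; apply: HN; apply: (IH S').
    by apply: leq_trans lt _.
  by move=> S''; apply: leq_trans le (optS S'').
by move/(_ _ S0 (ltnSn _) opt0).
Qed.
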